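(* Let $P$ be a property of metric spaces such that: (i) $P$ is hereditary, i.e., if $X$ has $P$ and $Z\subseteq X$ (with the induced metric), then $Z$ has $P$; (ii) $P$ is preserved under uniformly continuous images, i.e., if $X$ has $P$ and $g:X\to Y$ is a uniformly continuous surjection onto a metric space $Y$, then $Y$ has $P$; and (iii) $P$ is not preserved under continuous images, i.e., there exist metric spaces $X$, $Y$ and a continuous surjection $f:X\to Y$ such that $X$ has $P$ and $Y$ does not have $P$. Then $P$ is not preserved under homeomorphic images: there exist homeomorphic metric spaces $Z$ and $Z'$ such that $Z$ has $P$ and $Z'$ does not have $P$. *)

(* Defs.v *)
From Stdlib Require Import Reals.
Open Scope R_scope.

Record MetricSpace : Type := {
  carrier :> Type;
  dist : carrier -> carrier -> R;
  dist_ge0 : forall x y, 0 <= dist x y;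
  dist_eq0 : forall x y, dist x y = 0 <-> x = y;
  dist_sym : forall x y, dist x y = dist y x;
  dist_tri : forall x y z, dist x z <= dist x y + dist y z
}.

Arguments dist {m} _ _.

Definition subspace (X : MetricSpace) (Z : X -> Prop) : MetricSpace.
Proof.
  refine {| carrier := {x : X | Z x};
            dist := fun a b => @dist X (proj1_sig a) (proj1_sig b) |}.
  - intros; apply dist_ge0.
  - intros [a Ha] [b Hb]; simpl; split.
    + intro H; apply dist_eq0 in H; subst b.
      assert (Ha = Hb) by apply Classical_Prop.proof_irrelevance; subst; reflexivity.
    + intro H; injection H as H; subst; apply dist_eq0; reflexivity.
  - intros; apply dist_sym.
  - intros; apply dist_tri.
Defined.

Definition continuous_map {X Y : MetricSpace} (f : X -> Y) : Prop :=
  forall x (eps : R), 0 < eps -> exists delta, 0 < delta /\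
    forall y, dist x y < delta -> dist (f x) (f y) < eps.

Definition uniformly_continuous {X Y : MetricSpace} (f : X -> Y) : Prop :=
  forall eps : R, 0 < eps -> exists delta, 0 < delta /\
    forall x y, dist x y < delta -> dist (f x) (f y) < eps.

Definition surjective {A B : Type} (f : A -> B) : Prop :=
  forall b, exists a, f a = b.

Definition homeomorphic (X Y : MetricSpace) : Prop :=
  exists (f : X -> Y) (g : Y -> X),
    (forall x, g (f x) = x) /\ (forall y, f (g y) = y) /\
    continuous_map f /\ continuous_map g.

Definition hereditary (P : MetricSpace -> Prop) : Prop :=
  forall (X : MetricSpace) (Z : X -> Prop), P X -> P (subspace X Z).

Definition preserved_by_unif_cont_images (P : MetricSpace -> Prop) : Prop :=
  forall (X Y : MetricSpace) (g : X -> Y),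
    P X -> uniformly_continuous g -> surjective g -> P Y.

Definition preserved_by_cont_images (P : MetricSpace -> Prop) : Prop :=
  forall (X Y : MetricSpace) (f : X -> Y),
    P X -> continuous_map f -> surjective f -> P Y.

Definition preserved_by_homeomorphic_images (P : MetricSpace -> Prop) : Prop :=
  forall (Z Z' : MetricSpace), homeomorphic Z Z' -> P Z -> P Z'.

(* Main.v *)
Require Import Defs.
From Stdlib Require Import Reals Lra.
Open Scope R_scope.

Definition graphMS (X Y : MetricSpace) (f : X -> Y) : MetricSpace.
Proof.
  refine {| Defs.carrier := Defs.carrier X;
            Defs.dist := fun a b => @Defs.dist X a b + @Defs.dist Y (f a) (f b) |}.
  - intros; pose proof (Defs.dist_ge0 X x y); pose proof (Defs.dist_ge0 Y (f x) (f y)); lra.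
  - intros x y; split.
    + intro H; pose proof (Defs.dist_ge0 X x y); pose proof (Defs.dist_ge0 Y (f x) (f y)).
      apply (Defs.dist_eq0 X); lra.
    + intro H; subst; rewrite (proj2 (Defs.dist_eq0 X y y) eq_refl),
        (proj2 (Defs.dist_eq0 Y (f y) (f y)) eq_refl); lra.
  - intros; rewrite (Defs.dist_sym X x y), (Defs.dist_sym Y (f x)); reflexivity.
  - intros; pose proof (Defs.dist_tri X x y z); pose proof (Defs.dist_tri Y (f x) (f y) (f z)); lra.
Defined.

Theorem proposition2p2 (P : MetricSpace -> Prop) :
  hereditary P ->
  preserved_by_unif_cont_images P ->
  (exists (X Y : MetricSpace) (f : X -> Y),
      continuous_map f /\ surjective f /\ P X /\ ~ P Y) ->
  exists Z Z' : MetricSpace, homeomorphic Z Z' /\ P Z /\ ~ P Z'.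
Proof.
  intros _ HU [X [Y [f [Hc [Hs [HX HY]]]]]].
  exists X, (graphMS X Y f). split; [|split; [exact HX|]].
  - exists (fun x : X => (x : graphMS X Y f)), (fun x : graphMS X Y f => (x : X)).
    split; [reflexivity|split; [reflexivity|split]].
    + intros x eps He. destruct (Hc x (eps/2)) as [d [Hd Hd']]; [lra|].
      exists (Rmin d (eps/2)); split; [apply Rmin_pos; lra|].
      intros y Hy; simpl. pose proof (Rmin_l d (eps/2)); pose proof (Rmin_r d (eps/2)).
      specialize (Hd' y ltac:(lra)). lra.
    + intros x eps He. exists eps; split; [lra|]. intros y Hy; simpl in *.
      pose proof (Defs.dist_ge0 Y (f x) (f y)); lra.
  - intro HG. apply HY. apply (HU (graphMS X Y f) Y f HG).
    + intros eps He. exists eps; split; [lra|]. intros x y Hxy; simpl in *.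
      pose proof (Defs.dist_ge0 X x y); lra.
    + exact Hs.
Qed.
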